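(* Let $N\ge 2$, $x_0<x_1<\dots<x_N$, $h_i=x_i-x_{i-1}$, and let $f_1,\dots,f_N\in\mathbb{R}$ be a histogram. Let $I=[x_0,x_N]$, $I_i=[x_{i-1},x_i)$ for $i<N$, $I_N=[x_{N-1},x_N]$, and for $i=1,\dots,N$ let $L_i(x)=a_ix+b_i$ with $a_i=\frac{x_i-x_{i-1}}{x_N-x_0}$, $b_i=\frac{x_Nx_{i-1}-x_0x_i}{x_N-x_0}$, let $\alpha_i$ be arbitrary with $|\alpha_i|<1$, and let $q_i:I\to\mathbb{R}$ be Lipschitz continuous. Let $f$ be the unique bounded function on $I$ with $f(x)=\alpha_if(L_i^{-1}(x))+q_i(L_i^{-1}(x))$ for $x\in I_i$, $i=1,\dots,N$. Suppose there are real numbers $y_0,y_N$ such that $$\int_Iq_i(x)\,dx=\frac{h_if_i-\alpha_ia_i\sum_{j=1}^Nh_jf_j}{a_i}\quad(i=1,\dots,N),$$ $$q_1(x_0)=y_0(1-\alpha_1),\quad q_N(x_N)=y_N(1-\alpha_N),\quad \alpha_{i+1}y_0+q_{i+1}(x_0)=\alpha_iy_N+q_i(x_N)\ (i=1,\dots,N-1).$$ Then $f$ is continuous on $I$ and $\int_{x_{i-1}}^{x_i}f(x)\,dx=h_if_i$ for all $i=1,\dots,N$. *)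

(* Defs.v *)
From Stdlib Require Import Reals Lra.
From Coquelicot Require Import Coquelicot.
Open Scope R_scope.

(* Nodes x_0 < ... < x_N are given as x : nat -> R; indices i range over 1..N. *)

Definition hstep (x : nat -> R) (i : nat) : R := x i - x (i - 1)%nat.

Definition a_coef (x : nat -> R) (N i : nat) : R :=
  (x i - x (i - 1)%nat) / (x N - x 0%nat).
Definition b_coef (x : nat -> R) (N i : nat) : R :=
  (x N * x (i - 1)%nat - x 0%nat * x i) / (x N - x 0%nat).
Definition L_map (x : nat -> R) (N i : nat) (t : R) : R :=
  a_coef x N i * t + b_coef x N i.
Definition L_inv (x : nat -> R) (N i : nat) (t : R) : R :=
  (t - b_coef x N i) / a_coef x N i.

Definition in_I (x : nat -> R) (N : nat) (t : R) : Prop := x 0%nat <= t <= x N.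

Definition in_Ii (x : nat -> R) (N i : nat) (t : R) : Prop :=
  if (i <? N)%nat then x (i - 1)%nat <= t < x i
  else x (i - 1)%nat <= t <= x i.

Definition lipschitz_on (D : R -> Prop) (g : R -> R) : Prop :=
  exists K : R, forall u v, D u -> D v -> Rabs (g u - g v) <= K * Rabs (u - v).

Definition bounded_on (D : R -> Prop) (g : R -> R) : Prop :=
  exists M : R, forall t, D t -> Rabs (g t) <= M.

Definition continuous_on_set (D : R -> Prop) (g : R -> R) : Prop :=
  forall t, D t -> filterlim g (within D (locally t)) (locally (g t)).

(* Main.v *)
Require Import Defs.
From Stdlib Require Import Reals Lra Lia Psatz.
From Coquelicot Require Import Coquelicot.
Open Scope R_scope.

Lemma mono (N:nat) (x:nat->R) : (forall i, (1<=i<=N)%nat -> x (i-1)%nat < x i) ->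
  forall k m, (k <= m <= N)%nat -> x k <= x m.
Proof. intros H k m. induction m; intros [H1 H2].
 - assert (k=0)%nat by lia. subst; lra.
 - destruct (Nat.eq_dec k (S m)). subst; lra.
   specialize (H (S m) ltac:(lia)). replace (S m - 1)%nat with m in H by lia.
   specialize (IHm ltac:(lia)). lra.
Qed.

Lemma find_right N x t : x 0%nat <= t < x N ->
  exists i, (1<=i<=N)%nat /\ x (i-1)%nat <= t < x i.
Proof. intros [H1 H2].
 assert (forall k, (k<=N)%nat -> t < x k -> exists i, (1<=i<=k)%nat /\ x (i-1)%nat <= t < x i).
 { induction k; intros Hk Ht. lra. destruct (Rlt_le_dec t (x k)).
   - destruct (IHk ltac:(lia) r) as [i [? ?]]. exists i; split; [lia|auto].
   - exists (S k). replace (S k - 1)%nat with k by lia. split; [lia|lra]. }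
 destruct (H N (le_n N) H2) as [i [? ?]]. exists i; auto. Qed.

Lemma find_left N x t : x 0%nat < t <= x N ->
  exists i, (1<=i<=N)%nat /\ x (i-1)%nat < t <= x i.
Proof. intros [H1 H2].
 assert (forall k, (k<=N)%nat -> t <= x k -> exists i, (1<=i<=k)%nat /\ x (i-1)%nat < t <= x i).
 { induction k; intros Hk Ht. lra. destruct (Rle_lt_dec t (x k)).
   - destruct (IHk ltac:(lia) r) as [i [? ?]]. exists i; split; [lia|auto].
   - exists (S k). replace (S k - 1)%nat with k by lia. split; [lia|lra]. }
 destruct (H N (le_n N) H2) as [i [? ?]]. exists i; auto. Qed.

Fixpoint sm (g : nat -> R) (n:nat) : R := match n with 0%nat => 0 | S k => sm g k + g (S k) end.

Lemma sm_ext g h n : (forall i, (1<=i<=n)%nat -> g i = h i) -> sm g n = sm h n.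
Proof. induction n; intros H; simpl. auto. rewrite IHn, H. auto. lia. intros; apply H; lia. Qed.

Lemma sm_lin g h a b n : sm (fun i => a * g i + b * h i) n = a * sm g n + b * sm h n.
Proof. induction n; simpl. ring. rewrite IHn. ring. Qed.

Lemma sm_lt g h n : (1<=n)%nat -> (forall i, (1<=i<=n)%nat -> g i < h i) -> sm g n < sm h n.
Proof. induction n; intros Hn H. lia. simpl. destruct (Nat.eq_dec n 0).
 subst. simpl. specialize (H 1%nat ltac:(lia)). lra.
 assert (sm g n < sm h n) by (apply IHn; [lia| intros; apply H; lia]).
 specialize (H (S n) ltac:(lia)). lra. Qed.

Lemma sm_tel (x : nat -> R) n : sm (fun i => x i - x (i-1)%nat) n = x n - x 0%nat.
Proof. induction n; simpl. ring. rewrite IHn. replace (n-0)%nat with n by lia. ring. Qed.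

Lemma sm_sum g n : sum_n_m g 1 n = sm g n.
Proof. induction n. rewrite sum_n_m_zero by lia. reflexivity.
 rewrite sum_n_Sm by lia. rewrite IHn. reflexivity. Qed.

Fixpoint cmax (al : nat -> R) n := match n with 0%nat => 0 | S k => Rmax (cmax al k) (Rabs (al (S k))) end.

Lemma cmax_ge0 al n : 0 <= cmax al n.
Proof. induction n; simpl. lra. eapply Rle_trans; [apply IHn| apply Rmax_l]. Qed.

Lemma cmax_ge al n i : (1<=i<=n)%nat -> Rabs (al i) <= cmax al n.
Proof. induction n; intros H. lia. simpl. destruct (Nat.eq_dec i (S n)).
 subst; apply Rmax_r. eapply Rle_trans; [apply IHn; lia| apply Rmax_l]. Qed.

Lemma cmax_lt1 al n : (forall i, (1<=i<=n)%nat -> Rabs (al i) < 1) -> cmax al n < 1.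
Proof. induction n; intros H; simpl. lra. apply Rmax_lub_lt. apply IHn; intros; apply H; lia.
 apply H; lia. Qed.

Lemma in_Ii_lt x N i t : x (i-1)%nat <= t < x i -> in_Ii x N i t.
Proof. intros. unfold in_Ii. destruct (i <? N)%nat; lra. Qed.
Lemma in_Ii_N x N t : x (N-1)%nat <= t <= x N -> in_Ii x N N t.
Proof. intros. unfold in_Ii. rewrite Nat.ltb_irrefl. lra. Qed.

Lemma epsdelta
  (N : nat) (x : nat -> R) (alpha : nat -> R)
  (q : nat -> R -> R) (f : R -> R) (y0 yN : R) :
  (2 <= N)%nat ->
  (forall i, (1 <= i <= N)%nat -> x (i - 1)%nat < x i) ->
  (forall i, (1 <= i <= N)%nat -> Rabs (alpha i) < 1) ->
  (forall i, (1 <= i <= N)%nat -> lipschitz_on (in_I x N) (q i)) ->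
  bounded_on (in_I x N) f ->
  (forall i t, (1 <= i <= N)%nat -> in_Ii x N i t ->
     f t = alpha i * f (L_inv x N i t) + q i (L_inv x N i t)) ->
  q 1%nat (x 0%nat) = y0 * (1 - alpha 1%nat) ->
  q N (x N) = yN * (1 - alpha N) ->
  (forall i, (1 <= i <= N - 1)%nat ->
     alpha (i + 1)%nat * y0 + q (i + 1)%nat (x 0%nat) = alpha i * yN + q i (x N)) ->
  (forall i t, (1 <= i <= N)%nat -> x (i-1)%nat <= t <= x i ->
     f t = alpha i * f (L_inv x N i t) + q i (L_inv x N i t)) /\
  (forall t, in_I x N t -> forall eps, 0 < eps -> exists d, 0 < d /\
     forall s, in_I x N s -> Rabs (s - t) < d -> Rabs (f s - f t) <= eps).
Proof.
intros HN Hx Ha Hq Hb Hf Hy0 HyN Hyi.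
set (D := x N - x 0%nat).
assert (Hmono := mono N x Hx).
assert (HD : 0 < D). { unfold D. assert (x 0%nat <= x (N-1)%nat) by (apply Hmono; lia).
  specialize (Hx N ltac:(lia)). lra. }
set (Li := fun (i:nat) (y:R) => x 0%nat + (y - x (i-1)%nat) * (D / (x i - x (i-1)%nat))).
assert (HLi : forall i y, (1<=i<=N)%nat -> L_inv x N i y = Li i y).
{ intros i y Hi. specialize (Hx i Hi). unfold L_inv, a_coef, b_coef, Li, D. field. assert (Hmx := Hmono (i-1)%nat N ltac:(lia)). unfold D in HD. lra. }
assert (Li0 : forall i, Li i (x (i-1)%nat) = x 0%nat).
{ intros i. unfold Li. replace (x (i-1)%nat - x (i-1)%nat) with 0 by ring. ring. }
assert (LiN : forall i, (1<=i<=N)%nat -> Li i (x i) = x N).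
{ intros i Hi. specialize (Hx i Hi). unfold Li, D. field. lra. }
assert (f0 : f (x 0%nat) = y0).
{ assert (H1x : x (1-1)%nat <= x 0%nat < x 1%nat).
  { specialize (Hx 1%nat). simpl in *. split. lra. apply Hx. lia. }
  assert (H := Hf 1%nat (x 0%nat)). specialize (H ltac:(lia) (in_Ii_lt _ _ _ _ H1x)).
  rewrite HLi in H by lia. rewrite Li0 in H. rewrite Hy0 in H.
  specialize (Ha 1%nat ltac:(lia)). apply Rabs_def2 in Ha. nra. }
assert (fN : f (x N) = yN).
{ assert (HNx : x (N-1)%nat <= x N <= x N) by (split; [apply Hmono; lia| lra]).
  assert (H := Hf N (x N)). specialize (H ltac:(lia) (in_Ii_N _ _ _ HNx)).
  rewrite HLi in H by lia. rewrite LiN in H by lia. rewrite HyN in H.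
  specialize (Ha N ltac:(lia)). apply Rabs_def2 in Ha. nra. }
assert (G : forall i t, (1 <= i <= N)%nat -> x (i-1)%nat <= t <= x i ->
     f t = alpha i * f (Li i t) + q i (Li i t)).
{ intros i t Hi Ht. destruct (Rlt_le_dec t (x i)).
  - rewrite <- HLi by auto. apply Hf; auto. apply in_Ii_lt; lra.
  - assert (t = x i) by lra. subst t. destruct (Nat.eq_dec i N).
    + subst i. rewrite <- HLi by auto. apply Hf; auto. apply in_Ii_N; lra.
    + rewrite LiN by auto. rewrite fN. rewrite <- Hyi by lia. rewrite <- f0.
      replace (x 0%nat) with (Li (i+1)%nat (x ((i+1)-1)%nat)) by apply Li0.
      replace ((i+1)-1)%nat with i by lia.
      rewrite <- HLi by lia. apply Hf. lia. apply in_Ii_lt.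
      replace ((i+1)-1)%nat with i by lia. split. lra.
      specialize (Hx (i+1)%nat ltac:(lia)). replace ((i+1)-1)%nat with i in Hx by lia. lra. }
split.
{ intros i t Hi Ht. rewrite HLi by auto. apply G; auto. }
assert (LiI : forall i t, (1<=i<=N)%nat -> x (i-1)%nat <= t <= x i -> in_I x N (Li i t)).
{ intros i t Hi Ht. specialize (Hx i Hi). unfold in_I, Li.
  set (r := D / (x i - x (i-1)%nat)).
  assert (Hr : (x i - x (i-1)%nat) * r = D) by (unfold r; field; lra).
  assert (0 < r) by (unfold r; apply Rdiv_lt_0_compat; lra).
  unfold D in Hr. nra. }
destruct Hb as [M HM].
assert (I0 : in_I x N (x 0%nat)) by (unfold in_I, D in *; lra).
assert (HM0 : 0 <= M) by (specialize (HM _ I0); pose proof (Rabs_pos (f (x 0%nat))); lra).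
set (c := cmax alpha N).
assert (Hc0 : 0 <= c) by apply cmax_ge0.
assert (Hc1 : c < 1) by (apply cmax_lt1; auto).
assert (Hci : forall i, (1<=i<=N)%nat -> Rabs (alpha i) <= c) by (intros; apply cmax_ge; auto).
assert (P : forall n t, in_I x N t -> forall eta, 0 < eta -> exists d, 0 < d /\
     forall s, in_I x N s -> Rabs (s - t) < d -> Rabs (f s - f t) <= 2 * M * c ^ n + eta).
{ induction n.
  - intros t Ht eta He. exists 1. split. lra. intros s Hs _.
    unfold Rminus. eapply Rle_trans; [apply Rabs_triang|]. rewrite Rabs_Ropp.
    pose proof (HM _ Hs). pose proof (HM _ Ht). simpl. lra.
  - intros t Ht eta He.
    assert (PC : forall i, (1<=i<=N)%nat -> x (i-1)%nat <= t <= x i -> exists d, 0 < d /\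
       forall s, x (i-1)%nat <= s <= x i -> Rabs (s - t) < d ->
       Rabs (f s - f t) <= 2 * M * c ^ (S n) + eta).
    { intros i Hi Hti.
      assert (Hxi := Hx i Hi).
      set (r := D / (x i - x (i-1)%nat)).
      assert (0 < r) by (unfold r; apply Rdiv_lt_0_compat; lra).
      destruct (IHn (Li i t) (LiI i t Hi Hti) (eta/2)) as [d1 [Hd1 H1]]. lra.
      destruct (Hq i Hi) as [K HK].
      set (d2 := eta / 2 / (Rabs K + 1)).
      assert (Hd2 : 0 < d2) by (unfold d2; apply Rdiv_lt_0_compat; [lra| pose proof (Rabs_pos K); lra]).
      assert (HKd2 : Rabs K * d2 <= eta / 2).
      { pose proof (Rabs_pos K).
        apply Rle_trans with ((Rabs K + 1) * d2).
        apply Rmult_le_compat_r; lra. unfold d2; right; field; lra. }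
      exists (Rmin d1 d2 / r). split. apply Rdiv_lt_0_compat; auto. apply Rmin_pos; auto.
      intros s Hs Hst.
      rewrite (G i s Hi Hs), (G i t Hi Hti).
      assert (Hdiff : Li i s - Li i t = (s - t) * r) by (unfold Li, r; ring).
      assert (Hlt : Rabs (Li i s - Li i t) < Rmin d1 d2).
      { rewrite Hdiff, Rabs_mult, (Rabs_right r) by lra.
        apply Rlt_le_trans with (Rmin d1 d2 / r * r). apply Rmult_lt_compat_r; auto.
        right; field; lra. }
      assert (Hm1 := Rmin_l d1 d2). assert (Hm2 := Rmin_r d1 d2).
      specialize (H1 (Li i s) (LiI i s Hi Hs) ltac:(lra)).
      specialize (HK (Li i s) (Li i t) (LiI i s Hi Hs) (LiI i t Hi Hti)).
      assert (HKb : K * Rabs (Li i s - Li i t) <= eta / 2).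
      { eapply Rle_trans. apply Rmult_le_compat_r. apply Rabs_pos. apply RRle_abs.
        eapply Rle_trans; [|apply HKd2]. apply Rmult_le_compat_l. apply Rabs_pos. lra. }
      replace (alpha i * f (Li i s) + q i (Li i s) - (alpha i * f (Li i t) + q i (Li i t)))
        with (alpha i * (f (Li i s) - f (Li i t)) + (q i (Li i s) - q i (Li i t))) by ring.
      eapply Rle_trans; [apply Rabs_triang|]. rewrite Rabs_mult.
      assert (Hai := Hci i Hi). assert (Hai1 := Ha i Hi).
      assert (Hp : 0 <= c ^ n) by (apply pow_le; auto).
      assert (Rabs (alpha i) * Rabs (f (Li i s) - f (Li i t)) <= c * (2 * M * c ^ n) + eta / 2).
      { eapply Rle_trans. apply Rmult_le_compat_l. apply Rabs_pos. apply H1.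
        pose proof (Rabs_pos (alpha i)).
        assert (HA : 0 <= 2 * M * c ^ n) by (apply Rmult_le_pos; lra).
        set (A := 2 * M * c ^ n) in *. nra. }
      simpl. lra. }
    assert (R : exists d, 0 < d /\ forall s, in_I x N s -> t <= s -> Rabs (s - t) < d ->
       Rabs (f s - f t) <= 2 * M * c ^ (S n) + eta).
    { destruct (Rlt_le_dec t (x N)).
      - destruct (find_right N x t ltac:(unfold in_I in Ht; lra)) as [i [Hi Hti]].
        destruct (PC i Hi ltac:(lra)) as [d [Hd H]].
        exists (Rmin d (x i - t)). split. apply Rmin_pos; lra.
        intros s Hs Hts Hst. apply H. rewrite Rabs_right in Hst by lra.
        pose proof (Rmin_r d (x i - t)). lra.
        pose proof (Rmin_l d (x i - t)). lra.
      - exists 1. split. lra. intros s Hs Hts _. unfold in_I in *. replace (f s - f t) with 0.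
        rewrite Rabs_R0. pose proof (pow_le c (S n) Hc0). nra.
        replace s with t by lra. ring. }
    assert (L : exists d, 0 < d /\ forall s, in_I x N s -> s <= t -> Rabs (s - t) < d ->
       Rabs (f s - f t) <= 2 * M * c ^ (S n) + eta).
    { destruct (Rlt_le_dec (x 0%nat) t).
      - destruct (find_left N x t ltac:(unfold in_I in Ht; lra)) as [i [Hi Hti]].
        destruct (PC i Hi ltac:(lra)) as [d [Hd H]].
        exists (Rmin d (t - x (i-1)%nat)). split. apply Rmin_pos; lra.
        intros s Hs Hts Hst. apply H. rewrite Rabs_left1 in Hst by lra.
        pose proof (Rmin_r d (t - x (i-1)%nat)). lra.
        pose proof (Rmin_l d (t - x (i-1)%nat)). lra.
      - exists 1. split. lra. intros s Hs Hts _. unfold in_I in *. replace (f s - f t) with 0.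
        rewrite Rabs_R0. pose proof (pow_le c (S n) Hc0). nra.
        replace s with t by lra. ring. }
    destruct R as [d1 [Hd1 H1]]. destruct L as [d2 [Hd2 H2]].
    exists (Rmin d1 d2). split. apply Rmin_pos; auto.
    intros s Hs Hst. pose proof (Rmin_l d1 d2). pose proof (Rmin_r d1 d2).
    destruct (Rle_lt_dec t s). apply H1; auto; lra. apply H2; auto; lra. }
intros t Ht eps He.
destruct (pow_lt_1_zero c ltac:(rewrite Rabs_right; lra) (eps / (4 * M + 2))) as [n Hn].
apply Rdiv_lt_0_compat; lra.
specialize (Hn n (le_n n)). rewrite Rabs_right in Hn by (apply Rle_ge, pow_le; auto).
destruct (P n t Ht (eps/2)) as [d [Hd H]]. lra.
exists d. split. auto. intros s Hs Hst. specialize (H s Hs Hst).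
assert (2 * M * c ^ n <= eps / 2).
{ assert (c ^ n * (4 * M + 2) < eps).
  { apply Rlt_le_trans with (eps / (4 * M + 2) * (4 * M + 2)).
    apply Rmult_lt_compat_r; lra. right; field; lra. }
  nra. }
lra.
Qed.

Lemma sm_scal g k n : sm (fun i => k * g i) n = k * sm g n.
Proof. induction n; simpl. ring. rewrite IHn. ring. Qed.

Theorem mainTheorem9
  (N : nat) (x : nat -> R) (fh : nat -> R) (alpha : nat -> R)
  (q : nat -> R -> R) (f : R -> R) (y0 yN : R) :
  (2 <= N)%nat ->
  (forall i, (1 <= i <= N)%nat -> x (i - 1)%nat < x i) ->
  (forall i, (1 <= i <= N)%nat -> Rabs (alpha i) < 1) ->
  (forall i, (1 <= i <= N)%nat -> lipschitz_on (in_I x N) (q i)) ->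
  bounded_on (in_I x N) f ->
  (forall i t, (1 <= i <= N)%nat -> in_Ii x N i t ->
     f t = alpha i * f (L_inv x N i t) + q i (L_inv x N i t)) ->
  (forall i, (1 <= i <= N)%nat ->
     is_RInt (q i) (x 0%nat) (x N)
       ((hstep x i * fh i
         - alpha i * a_coef x N i
             * sum_n_m (fun j => hstep x j * fh j) 1 N) / a_coef x N i)) ->
  q 1%nat (x 0%nat) = y0 * (1 - alpha 1%nat) ->
  q N (x N) = yN * (1 - alpha N) ->
  (forall i, (1 <= i <= N - 1)%nat ->
     alpha (i + 1)%nat * y0 + q (i + 1)%nat (x 0%nat) = alpha i * yN + q i (x N)) ->
  continuous_on_set (in_I x N) f /\
  (forall i, (1 <= i <= N)%nat -> is_RInt f (x (i - 1)%nat) (x i) (hstep x i * fh i)).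
Proof.
intros HN Hx Ha Hq Hb Hf Hqi Hy0 HyN Hyi.
destruct (epsdelta N x alpha q f y0 yN HN Hx Ha Hq Hb Hf Hy0 HyN Hyi) as [G ED].
assert (Hmono := mono N x Hx).
assert (HD : 0 < x N - x 0%nat). { assert (x 0%nat <= x (N-1)%nat) by (apply Hmono; lia).
  specialize (Hx N ltac:(lia)). lra. }
split.
{ intros t Ht. apply filterlim_locally. intros eps. unfold within.
  assert (He2 : 0 < eps/2) by (destruct eps as [e He]; simpl; lra).
  destruct (ED t Ht (eps/2) He2) as [d [Hd H]].
  exists (mkposreal d Hd). intros s Hs HI. unfold ball in Hs |- *. simpl in Hs |- *.
  unfold AbsRing_ball, abs, minus, plus, opp in Hs |- *. simpl in Hs |- *.
  specialize (H s HI Hs). destruct eps as [e He]; simpl in *; unfold Rminus in *; lra. }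
set (cl := fun t => Rmax (x 0%nat) (Rmin t (x N))).
assert (clI : forall t, in_I x N (cl t)).
{ intros t. unfold cl, in_I. split. apply Rmax_l. apply Rmax_lub. lra. apply Rmin_r. }
assert (clid : forall t, in_I x N t -> cl t = t).
{ intros t [H1 H2]. unfold cl. rewrite Rmin_left by lra. rewrite Rmax_right; lra. }
assert (cllip : forall s t, Rabs (cl s - cl t) <= Rabs (s - t)).
{ intros s t. unfold cl. unfold Rmax, Rmin.
  destruct (Rle_dec s (x N)), (Rle_dec t (x N)), (Rle_dec (x 0%nat) s), (Rle_dec (x 0%nat) t),
   (Rle_dec (x 0%nat) (x N)); try lra;
  repeat match goal with |- context [Rabs ?z] => destruct (Rabs_spec z) as [[? ->]|[? ->]] || idtac end;
  unfold Rabs; repeat destruct Rcase_abs; lra. }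
set (g := fun t => f (cl t)).
assert (gc : forall z, continuous g z).
{ intros z. apply filterlim_locally. intros eps.
  assert (He2 : 0 < eps/2) by (destruct eps as [e He]; simpl; lra).
  destruct (ED (cl z) (clI z) (eps/2) He2) as [d [Hd H]].
  exists (mkposreal d Hd). intros s Hs. unfold ball in Hs |- *. simpl in Hs |- *.
  unfold AbsRing_ball, abs, minus, plus, opp in Hs |- *. simpl in Hs |- *.
  specialize (H (cl s) (clI s)). unfold g.
  assert (Rabs (cl s - cl z) < d) by (eapply Rle_lt_trans; [apply cllip| exact Hs]).
  specialize (H H0). destruct eps as [e He]; simpl in *; unfold Rminus in *; lra. }
assert (gf : forall t, in_I x N t -> g t = f t) by (intros; unfold g; rewrite clid; auto).
assert (Hex : ex_RInt g (x 0%nat) (x N)) by (apply (@ex_RInt_continuous R_CompleteNormedModule); intros; apply gc).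
set (F := RInt g (x 0%nat) (x N)).
assert (HF : is_RInt g (x 0%nat) (x N) F) by (apply (@RInt_correct R_CompleteNormedModule); auto).
set (Sm := sum_n_m (fun j => hstep x j * fh j) 1 N).
set (P := fun i => a_coef x N i * alpha i * F + (hstep x i * fh i - alpha i * a_coef x N i * Sm)).
assert (Piece : forall i, (1<=i<=N)%nat -> is_RInt g (x (i-1)%nat) (x i) (P i)).
{ intros i Hi. assert (Hxi := Hx i Hi).
  assert (Hl : x 0%nat <= x (i-1)%nat) by (apply Hmono; lia).
  assert (Hr : x i <= x N) by (apply Hmono; lia).
  set (a := a_coef x N i).
  assert (Ha0 : 0 < a) by (unfold a, a_coef; apply Rdiv_lt_0_compat; lra).
  set (u := 1 / a). set (v := x 0%nat - x (i-1)%nat * u).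
  assert (E1 : u * x (i-1)%nat + v = x 0%nat) by (unfold v; ring).
  assert (E2 : u * x i + v = x N) by (unfold v, u, a, a_coef; field; lra).
  assert (HLv : forall y, L_inv x N i y = u * y + v).
  { intros y. unfold L_inv, v, u, a, a_coef, b_coef. field. lra. }
  assert (Hg1 : is_RInt g (u * x (i-1)%nat + v) (u * x i + v) F) by (rewrite E1, E2; auto).
  assert (Hq1 := Hqi i Hi). rewrite <- E1, <- E2 in Hq1.
  apply is_RInt_comp_lin in Hg1. apply is_RInt_comp_lin in Hq1.
  apply (is_RInt_scal _ _ _ (a * alpha i)) in Hg1.
  apply (is_RInt_scal _ _ _ a) in Hq1.
  assert (Hs := is_RInt_plus _ _ _ _ _ _ Hg1 Hq1).
  replace (P i) with (plus (scal (a * alpha i) F) (scal a ((hstep x i * fh i -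
            alpha i * a_coef x N i * Sm) / a_coef x N i))).
  2: { unfold P, plus, scal; simpl. unfold mult; simpl. fold a. field. lra. }
  eapply is_RInt_ext; [| exact Hs]. intros y Hy.
  rewrite Rmin_left in Hy by lra. rewrite Rmax_right in Hy by lra.
  unfold plus, scal; simpl. unfold mult; simpl.
  assert (HyI : in_I x N y) by (unfold in_I; lra).
  rewrite (gf y HyI). rewrite (G i y Hi ltac:(lra)). rewrite HLv.
  assert (Hu : 0 < u) by (unfold u; apply Rdiv_lt_0_compat; lra).
  assert (HI2 : in_I x N (u * y + v)) by (unfold in_I; split; nra).
  rewrite (gf _ HI2). unfold u. field. lra. }
assert (Chain : forall k, (k <= N)%nat -> is_RInt g (x 0%nat) (x k) (sm P k)).
{ induction k; intros Hk. simpl. apply (@is_RInt_point R_NormedModule).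
  simpl. apply (is_RInt_Chasles g _ (x k)). apply IHk; lia.
  replace k with (S k - 1)%nat at 1 by lia. apply Piece. lia. }
assert (HFe : F = sm P N) by (unfold F; apply (@is_RInt_unique R_CompleteNormedModule); apply Chain; lia).
set (sig := sm (fun i => a_coef x N i * alpha i) N).
assert (HP : sm P N = F * sig + (Sm - Sm * sig)).
{ rewrite (sm_ext P (fun i => (F - Sm) * (a_coef x N i * alpha i) + 1 * (hstep x i * fh i)))
    by (intros; unfold P; ring).
  rewrite sm_lin. unfold sig.
  replace (sm (fun i => hstep x i * fh i) N) with Sm by (unfold Sm; apply sm_sum). ring. }
assert (Hsig : sig < 1).
{ assert (sm (fun i => a_coef x N i) N = 1).
  { unfold a_coef. rewrite (sm_ext _ (fun i => / (x N - x 0%nat) * (x i - x (i-1)%nat))).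
    rewrite sm_scal, sm_tel. field. lra. intros; unfold Rdiv; ring. }
  rewrite <- H. apply sm_lt. lia. intros i Hi.
  assert (0 < a_coef x N i) by (unfold a_coef; specialize (Hx i Hi); apply Rdiv_lt_0_compat; lra).
  specialize (Ha i Hi). apply Rabs_def2 in Ha. nra. }
assert (FS : F = Sm).
{ rewrite HP in HFe. assert ((F - Sm) * (1 - sig) = 0) by lra.
  apply Rmult_integral in H. destruct H; lra. }
intros i Hi.
assert (Hxi := Hx i Hi).
assert (Hl : x 0%nat <= x (i-1)%nat) by (apply Hmono; lia).
assert (Hr : x i <= x N) by (apply Hmono; lia).
eapply is_RInt_ext; [| replace (hstep x i * fh i) with (P i); [apply Piece; auto|]].
intros y Hy. rewrite Rmin_left in Hy by lra. rewrite Rmax_right in Hy by lra.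
apply gf. unfold in_I; lra.
unfold P. rewrite FS. ring.
Qed.
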